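(* Let $q$ be a prime power and let $f(X)\in\mathbb{F}_q[X]$ be separable and exceptional over $\mathbb{F}_q$. Then: $\deg(f)\ne 2$; if $\deg(f)=3$ then $f(X)$ has at most one critical value; and if $\deg(f)=4$ then $q$ is even and $f(X)$ has no critical values.
   Context: $f(X)$ is separable if $f'(X)\neq 0$. $f(X)$ is exceptional over $\mathbb{F}_q$ if the only polynomials in $\mathbb{F}_q[X,Y]$ which divide $f(X)-f(Y)$ and are irreducible in $\overline{\mathbb{F}}_q[X,Y]$ are $c\cdot(X-Y)$ with $c\in\mathbb{F}_q^*$. A critical value of $f$ is $f(c)$ for some $c\in\overline{\mathbb{F}}_q$ with $f'(c)=0$. *)

(* Defs.v *)
From mathcomp Require Import all_boot all_order all_algebra all_field.
Set Implicit Arguments. Unset Strict Implicit. Unset Printing Implicit Defensive.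
Import GRing.Theory.
Local Open Scope ring_scope.

(* Bivariate polynomials over R are represented as {poly {poly R}}:
   the inner variable is X, the outer variable is Y. *)
Definition bvX (R : nzRingType) : {poly {poly R}} := ('X)%:P.
Definition bvY (R : nzRingType) : {poly {poly R}} := 'X.

Definition polyInX (R : nzRingType) (f : {poly R}) : {poly {poly R}} := f%:P.
Definition polyInY (R : nzRingType) (f : {poly R}) : {poly {poly R}} :=
  map_poly polyC f.

Definition rdivides (R : comNzRingType) (a b : R) : Prop := exists h : R, b = a * h.

Definition irreducible_elt (R : idomainType) (x : R) : Prop :=
  [/\ x != 0, x \isn't a GRing.unit &
      forall a b : R, x = a * b -> a \is a GRing.unit \/ b \is a GRing.unit].

(* f is exceptional over F, where iota : F -> K embeds F into an algebraic
   closure K: the only g in F[X,Y] dividing f(X)-f(Y) that are irreducible in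
   K[X,Y] are c*(X-Y) with c in F^*. *)
Definition exceptional (F : fieldType) (K : closedFieldType)
    (iota : {rmorphism F -> K}) (f : {poly F}) : Prop :=
  forall g : {poly {poly F}},
    rdivides g (polyInX f - polyInY f) ->
    irreducible_elt (map_poly (map_poly iota) g) ->
    exists2 c : F, c != 0 & g = (c%:P)%:P * (bvX F - bvY F).

Definition critical_value (F : fieldType) (K : closedFieldType)
    (iota : {rmorphism F -> K}) (f : {poly F}) (v : K) : Prop :=
  exists c : K, (map_poly iota f)^`().[c] = 0 /\ (map_poly iota f).[c] = v.

(* Main.v *)
Require Import Defs.
From mathcomp Require Import all_boot all_order all_algebra all_field.
From mathcomp Require Import ring zify.
From Stdlib Require Import Classical.
Import GRing.Theory.
Local Open Scope ring_scope.


Lemma G1 {R : idomainType} {p : {poly R}} {h : {poly {poly R}}} :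
  p^:P - p%:P = h * ('X - ('X)%:P) -> h.['X] = p^`().
Proof.
move=> E.
have := congr1 (fun q => (deriv q).['X]) E => /=.
rewrite derivB derivC subr0 deriv_map derivM derivB derivX derivC subr0 mulr1.
rewrite hornerD hornerM hornerD hornerN hornerX hornerC subrr mulr0 add0r.
by move=> <-; rewrite -/(comp_poly _ _) comp_polyXr.
Qed.

Lemma G2 {R : idomainType} {p : {poly R}} {h : {poly {poly R}}} {r} :
  p^:P - p%:P = h * ('X - ('X)%:P) -> h.[r] = 0 -> p \Po r = p.
Proof.
move=> E hr.
have := congr1 (fun q => q.[r]) E => /=.
rewrite hornerM hr mul0r hornerD hornerN hornerC => /eqP; rewrite subr_eq0 => /eqP.
by rewrite -/(comp_poly _ _).
Qed.

Lemma G3 {R : idomainType} {p : {poly R}} {h : {poly {poly R}}} :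
  (1 < size p)%N -> p^:P - p%:P = h * ('X - ('X)%:P) ->
  size h = (size p).-1 /\ lead_coef h = (lead_coef p)%:P.
Proof.
move=> sp E.
have sD : size (p^:P - p%:P) = size p.
  rewrite size_addl size_map_polyC // size_opp size_polyC.
  exact: leq_ltn_trans (leq_b1 _) sp.
have lD : lead_coef (p^:P - p%:P) = (lead_coef p)%:P.
  rewrite lead_coefDl; first by rewrite lead_coef_map_inj //; apply: polyC_inj.
  rewrite size_map_polyC size_opp size_polyC.
  exact: leq_ltn_trans (leq_b1 _) sp.
have hn0 : h != 0.
  apply/eqP => h0; move: sD; rewrite E h0 mul0r size_poly0.
  by case: (size p) sp.
split.
  by rewrite -sD E size_mul // ?size_XsubC ?addn2 // -size_poly_eq0 size_XsubC.
by rewrite -lD E lead_coefM lead_coefXsubC mulr1.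
Qed.
Lemma unit_const (K : fieldType) (a : {poly {poly K}}) :
  (size a <= 1)%N -> size (lead_coef a) = 1%N -> a \is a GRing.unit.
Proof.
move=> sa sl.
have a0 : a != 0 by apply/eqP => a0; move: sl; rewrite a0 lead_coef0 size_poly0.
have s1 : size a = 1%N.
  by apply/eqP; rewrite eqn_leq sa lt0n size_poly_eq0.
rewrite poly_unitE s1 eqxx /=.
move: sl; rewrite /lead_coef s1 /= => sl.
rewrite poly_unitE sl eqxx /= unitfE.
have := lead_coef_eq0 (a`_0); rewrite /lead_coef sl /= => ->.
by rewrite -size_poly_eq0 sl.
Qed.

Lemma root2 (K : fieldType) (a : {poly {poly K}}) :
  size a = 2%N -> size (lead_coef a) = 1%N -> exists r, a.[r] = 0.
Proof.
move=> sa sl.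
set u := lead_coef a.
have u0 : u`_0 != 0.
  have := lead_coef_eq0 u; rewrite /(lead_coef u) sl /= => ->.
  by rewrite -size_poly_eq0 sl.
have uE : u = (u`_0)%:P by rewrite [LHS]size1_polyC ?sl.
have aE : a = u%:P * 'X + (a`_0)%:P.
  apply/polyP => i; rewrite coefD coefMX !coefC.
  case: i => [|[|i]] /=; rewrite ?addr0 ?add0r //.
    by rewrite /u /lead_coef sa.
  by rewrite nth_default ?sa.
exists (- ((u`_0)^-1%:P * a`_0)).
rewrite {1}aE hornerD hornerMX !hornerC {1}uE mulrN mulrA -polyCM mulfV //.
by rewrite mul1r addNr.
Qed.

Lemma G4 {K : fieldType} {H a b : {poly {poly K}}} {al : K} :
  al != 0 -> lead_coef H = al%:P -> H = a * b ->
  a \isn't a GRing.unit -> b \isn't a GRing.unit ->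
  (3 <= size H)%N /\ ((size H <= 4)%N -> exists r, H.[r] = 0).
Proof.
move=> al0 lH Hab ua ub.
have H0 : H != 0 by rewrite -lead_coef_eq0 lH polyC_eq0.
have a0 : a != 0 by apply: contraNneq H0 => a0; rewrite Hab a0 mul0r.
have b0 : b != 0 by apply: contraNneq H0 => b0; rewrite Hab b0 mulr0.
have la0 : lead_coef a != 0 by rewrite lead_coef_eq0.
have lb0 : lead_coef b != 0 by rewrite lead_coef_eq0.
have sl : (size (lead_coef a) + size (lead_coef b)).-1 = 1%N.
  by rewrite -size_mul // -lead_coefM -Hab lH size_polyC al0.
have sla : size (lead_coef a) = 1%N.
  rewrite -size_poly_eq0 in la0; rewrite -size_poly_eq0 in lb0.
  move: la0 lb0 sl; rewrite -!lt0n; lia.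
have slb : size (lead_coef b) = 1%N by move: sl; rewrite sla.
have sa : (2 <= size a)%N.
  rewrite ltnNge; apply: contra ua => sa; exact: unit_const.
have sb : (2 <= size b)%N.
  rewrite ltnNge; apply: contra ub => sb; exact: unit_const.
have sH : size H = (size a + size b).-1 by rewrite Hab size_mul.
split; first by rewrite sH; lia.
move=> sH4.
have [ea|ea] : size a = 2%N \/ size b = 2%N.
  move: sH4; rewrite sH; lia.
  have [r ar] := @root2 _ _ ea sla; exists r; by rewrite Hab hornerM ar mul0r.
have [r br] := @root2 _ _ ea slb; exists r; by rewrite Hab hornerM br mulr0.
Qed.

Lemma key (F : finFieldType) (K : closedFieldType)
    (iota : {rmorphism F -> K}) (f : {poly F}) :
  f^`() != 0 -> exceptional iota f -> (2 < size f)%N ->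
  (3 < size f)%N /\ ((size f <= 5)%N -> exists r : {poly K},
     r != 'X /\ (map_poly iota f) \Po r = map_poly iota f).
Proof.
move=> df0 exc sf.
have rt : root (f^:P - f%:P) 'X.
  by rewrite /root hornerD hornerN hornerC -/(comp_poly _ _) comp_polyXr subrr.
have [h E] := sig_eqW (factor_theorem _ _ rt).
have hX := G1 E.
set FF := map_poly iota f.
set H := map_poly (map_poly iota) h.
have EK : FF^:P - FF%:P = H * ('X - ('X)%:P).
  have := congr1 (map_poly (map_poly iota)) E.
  rewrite rmorphB rmorphM /= rmorphB /= map_polyX !map_polyC /= map_polyX.
  rewrite -map_poly_comp => <-; congr (_ - _).
  rewrite -map_poly_comp; apply: eq_map_poly => x /=; by rewrite map_polyC.
have HX := G1 EK.
have sFF : size FF = size f by rewrite size_map_poly.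
have s1 : (1 < size FF)%N by rewrite sFF; lia.
have [sH lH] := G3 s1 EK.
have dFF : FF^`() != 0 by rewrite /FF deriv_map map_poly_eq0.
have nirr : ~ irreducible_elt H.
  move=> Hirr.
  have dv : rdivides h (polyInX f - polyInY f).
    exists (bvX F - bvY F); rewrite /polyInX /polyInY /bvX /bvY.
    by rewrite -opprB E -mulrN opprB.
  have [c c0 hc] := exc h dv Hirr.
  move: hX; rewrite hc /bvX /bvY hornerM hornerD hornerN hornerX !hornerC subrr mulr0.
  by move=> e; move: df0; rewrite -e eqxx.
have lF0 : iota (lead_coef f) != 0 by rewrite fmorph_eq0 lead_coef_eq0 -size_poly_eq0; case: (size f) sf.
have lH' : lead_coef H = (iota (lead_coef f))%:P by rewrite lH /FF lead_coef_map.
have [a [b [Hab [ua ub]]]] : exists a b, H = a * b /\ a \isn't a GRing.unit /\ b \isn't a GRing.unit.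
  apply: NNPP => nex; apply: nirr; split.
  - by rewrite -lead_coef_eq0 lH' polyC_eq0.
  - by rewrite poly_unitE sH sFF; case: (size f) sf => [|[|[|n]]].
  - move=> a b Hab; case: (boolP (a \is a GRing.unit)) => ua; first by left.
    case: (boolP (b \is a GRing.unit)) => ub; first by right.
    by exfalso; apply: nex; exists a, b.
have [s3 rr] := G4 lF0 lH' Hab ua ub.
split; first by move: s3; rewrite sH sFF; lia.
move=> s5; have [r Hr] := rr (ltac:(rewrite sH sFF; lia)).
exists r; split; last exact: G2 EK Hr.
apply/eqP => rX; move: Hr; rewrite rX HX => e; by move: dFF; rewrite e eqxx.
Qed.

Lemma expand5 {R : nzRingType} (p : {poly R}) : (size p <= 5)%N ->
  p = (p`_4)%:P * 'X^4 + (p`_3)%:P * 'X^3 + (p`_2)%:P * 'X^2 + (p`_1)%:P * 'X + (p`_0)%:P.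
Proof.
move=> sp; apply/polyP => i.
rewrite !coefD !coefCM !coefXn coefX !coefC.
case: i => [|[|[|[|[|i]]]]] /=; rewrite ?mulr0 ?mulr1 ?addr0 ?add0r //.
by rewrite nth_default //; apply: leq_trans sp _.
Qed.

Lemma lin_r (K : idomainType) (p r : {poly K}) : (1 < size p)%N -> p \Po r = p ->
  r = (r`_1)%:P * 'X + (r`_0)%:P.
Proof.
move=> sp E.
have := size_comp_poly p r; rewrite E => e.
have s2 : ((size r).-1 = 1)%N.
  have : ((size p).-1 * 1 = (size p).-1 * (size r).-1)%N by rewrite muln1.
  by move/eqP; rewrite eqn_mul2l; case: (size p) sp => [|[|k]] //= _ /eqP.
apply/polyP => i; rewrite coefD coefCM coefX coefC.
case: i => [|[|i]] /=; rewrite ?mulr0 ?mulr1 ?addr0 ?add0r //.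
rewrite nth_default //; move: s2; case: (size r) => [|[|[|k]]] //=.
Qed.

Lemma comp_lin (K : comNzRingType) (p : {poly K}) (m n : K) : (size p <= 5)%N ->
  p \Po (m%:P * 'X + n%:P) = (p`_4)%:P * (m%:P * 'X + n%:P)^+4 + (p`_3)%:P * (m%:P * 'X + n%:P)^+3
     + (p`_2)%:P * (m%:P * 'X + n%:P)^+2 + (p`_1)%:P * (m%:P * 'X + n%:P) + (p`_0)%:P.
Proof.
move=> sp; rewrite {1}(expand5 _ sp).
by rewrite !comp_polyD !comp_polyM !comp_polyC !comp_polyX.
Qed.

Lemma deg3 (K : fieldType) (p : {poly K}) (m n : K) :
  size p = 4%N -> 2 != 0 :> K -> m%:P * 'X + n%:P != 'X ->
  p \Po (m%:P * 'X + n%:P) = p -> p`_2 ^+ 2 = 3 * p`_3 * p`_1.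
Proof.
move=> sp two rX E.
have sp5 : (size p <= 5)%N by rewrite sp.
have p4 : p`_4 = 0 by rewrite nth_default ?sp.
have a0 : p`_3 != 0.
  have := lead_coef_eq0 p; rewrite /lead_coef sp /= => ->.
  by rewrite -size_poly_eq0 sp.
have {}E : (p`_4)%:P * (m%:P * 'X + n%:P)^+4 + (p`_3)%:P * (m%:P * 'X + n%:P)^+3
     + (p`_2)%:P * (m%:P * 'X + n%:P)^+2 + (p`_1)%:P * (m%:P * 'X + n%:P) + (p`_0)%:P =
   (p`_4)%:P * 'X^4 + (p`_3)%:P * 'X^3 + (p`_2)%:P * 'X^2 + (p`_1)%:P * 'X + (p`_0)%:P.
  by rewrite -(expand5 _ sp5) -comp_lin.
rewrite p4 in E.
set a := p`_3 in E a0 *; set b := p`_2 in E *; set c := p`_1 in E *; set d := p`_0 in E *.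
set r := m%:P * 'X + n%:P in E rX.
set Q := a%:P * (r^+2 + r * 'X + 'X^2) + b%:P * (r + 'X) + c%:P.
have : (r - 'X) * Q = 0.
  rewrite -[RHS](subrr (0%:P * r ^+ 4 + a%:P * r ^+ 3 + b%:P * r ^+ 2 + c%:P * r + d%:P)).
  rewrite [X in _ = _ - X]E /Q; ring.
move/eqP; rewrite mulf_eq0 subr_eq0 (negPf rX) /= => /eqP Q0.
have QE : Q = (a * (m^+2 + m + 1))%:P * 'X^2 + (a * (2 * m * n + n) + b * (m + 1))%:P * 'X
            + (a * n^+2 + b * n + c)%:P by rewrite /Q /r; ring.
have E1 : a * (m^+2 + m + 1) = 0.
  have := congr1 (fun q : {poly K} => q`_2) QE; rewrite Q0 !coefD !coefCM coefXn coefX !coefC /= => e; apply: etrans (esym e); ring.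
have E2 : a * (2 * m * n + n) + b * (m + 1) = 0.
  have := congr1 (fun q : {poly K} => q`_1) QE; rewrite Q0 !coefD !coefCM coefXn coefX !coefC /= => e; apply: etrans (esym e); ring.
have E3 : a * n^+2 + b * n + c = 0.
  have := congr1 (fun q : {poly K} => q`_0) QE; rewrite Q0 !coefD !coefCM coefXn coefX !coefC /= => e; apply: etrans (esym e); ring.
have key : 4 * a * (b^+2 - 3 * a * c) =
   4 * (a * (m^+2 + m + 1)) * (2 * a * n + b)^+2 - 12 * a^+2 * (a * n^+2 + b * n + c)
   - 4 * a * (a * (2 * m * n + n) + b * (m + 1))^+2 + 4 * a * b * (a * (2 * m * n + n) + b * (m + 1)).
  ring.
move: key; rewrite E1 E2 E3; rewrite !(mulr0, mul0r, subr0, addr0, expr0n) /= => /eqP.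
rewrite !mulf_eq0 (negPf a0) orbF.
have -> : (4 : K) = 2 * 2 by rewrite -natrM.
rewrite mulf_eq0 (negPf two) /= subr_eq0 => /eqP.
by [].
Qed.

Lemma deg4 (K : fieldType) (p : {poly K}) (m n : K) :
  size p = 5%N -> m%:P * 'X + n%:P != 'X ->
  p \Po (m%:P * 'X + n%:P) = p ->
  p`_4 * (m^+3 + m^+2 + m + 1) = 0 /\
  p`_4 * (3 * m^+2 * n + 2 * m * n + n) + p`_3 * (m^+2 + m + 1) = 0.
Proof.
move=> sp rX E.
have sp5 : (size p <= 5)%N by rewrite sp.
have {}E : (p`_4)%:P * (m%:P * 'X + n%:P)^+4 + (p`_3)%:P * (m%:P * 'X + n%:P)^+3
     + (p`_2)%:P * (m%:P * 'X + n%:P)^+2 + (p`_1)%:P * (m%:P * 'X + n%:P) + (p`_0)%:P =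
   (p`_4)%:P * 'X^4 + (p`_3)%:P * 'X^3 + (p`_2)%:P * 'X^2 + (p`_1)%:P * 'X + (p`_0)%:P.
  by rewrite -(expand5 _ sp5) -comp_lin.
set a := p`_4 in E *; set b := p`_3 in E *; set c := p`_2 in E *; set d := p`_1 in E *.
set e := p`_0 in E *.
set r := m%:P * 'X + n%:P in E rX.
set Q := a%:P * (r^+3 + r^+2 * 'X + r * 'X^2 + 'X^3) + b%:P * (r^+2 + r * 'X + 'X^2)
         + c%:P * (r + 'X) + d%:P.
have : (r - 'X) * Q = 0.
  rewrite -[RHS](subrr (a%:P * r ^+ 4 + b%:P * r ^+ 3 + c%:P * r ^+ 2 + d%:P * r + e%:P)).
  rewrite [X in _ = _ - X]E /Q; ring.
move/eqP; rewrite mulf_eq0 subr_eq0 (negPf rX) /= => /eqP Q0.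
have QE : Q = (a * (m^+3 + m^+2 + m + 1))%:P * 'X^3
            + (a * (3 * m^+2 * n + 2 * m * n + n) + b * (m^+2 + m + 1))%:P * 'X^2
            + (a * (3 * m * n^+2 + n^+2) + b * (2 * m * n + n) + c * (m + 1))%:P * 'X
            + (a * n^+3 + b * n^+2 + c * n + d)%:P by rewrite /Q /r; ring.
split.
  have := congr1 (fun q : {poly K} => q`_3) QE; rewrite Q0 !coefD !coefCM !coefXn coefX !coefC /= => e0; apply: etrans (esym e0); ring.
have := congr1 (fun q : {poly K} => q`_2) QE; rewrite Q0 !coefD !coefCM !coefXn coefX !coefC /= => e0; apply: etrans (esym e0); ring.
Qed.

Lemma deriv5 (K : idomainType) (p : {poly K}) : (size p <= 5)%N ->
  p^`() = (p`_4 *+ 4)%:P * 'X^3 + (p`_3 *+ 3)%:P * 'X^2 + (p`_2 *+ 2)%:P * 'X + (p`_1)%:P.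
Proof.
move=> sp.
have sd : (size p^`() <= 5)%N.
  have [->|p0] := eqVneq p 0; first by rewrite deriv0 size_poly0.
  by apply: leq_trans (ltnW (lt_size_deriv p0)) sp.
rewrite {1}(expand5 _ sd) !coef_deriv.
have -> : p`_5 = 0 by rewrite nth_default.
by rewrite mul0rn polyC0 mul0r add0r.
Qed.

Arguments deriv5 {K p}.
Arguments lin_r {K p r}.
Arguments deg3 {K p m n}.
Arguments deg4 {K p m n}.
Arguments key {F K iota f}.

Theorem lemma2p30 (F : finFieldType) (K : closedFieldType)
    (iota : {rmorphism F -> K}) (algK : integralRange iota) (f : {poly F}) :
  f^`() != 0 ->
  exceptional iota f ->
  [/\ (size f).-1 != 2%N,
      (size f).-1 = 3%N ->
        (forall v w : K, critical_value iota f v -> critical_value iota f w -> v = w)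
    & (size f).-1 = 4%N ->
        ~~ odd #|F| /\ (forall v : K, ~ critical_value iota f v)].
Proof.
move=> df0 exc.
set FF := map_poly iota f.
have sFF : size FF = size f by rewrite size_map_poly.
have cFF i : FF`_i = iota f`_i by rewrite coef_map.
have dFF : FF^`() != 0 by rewrite /FF deriv_map map_poly_eq0.
split.
- apply/eqP => s3.
  have [s4 _] := key df0 exc (ltac:(lia)).
  lia.
- move=> s3 v w [x [dx vx]] [y [dy wy]].
  have sf4 : size f = 4%N by lia.
  have [_ rr] := key df0 exc (ltac:(lia)).
  have [r [rX Er]] := rr (ltac:(lia)).
  have sF4 : size FF = 4%N by rewrite sFF.
  have s1 : (1 < size FF)%N by rewrite sF4.
  rewrite -/FF in dx vx dy wy Er.
  have rE := lin_r s1 Er.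
  set m := r`_1 in rE; set n := r`_0 in rE.
  rewrite rE in rX Er.
  have sp5 : (size FF <= 5)%N by rewrite sF4.
  have F4 : FF`_4 = 0 by rewrite nth_default ?sF4.
  have dE := deriv5 sp5; rewrite F4 mul0rn polyC0 mul0r add0r in dE.
  have a0 : FF`_3 != 0.
    have := lead_coef_eq0 FF; rewrite /lead_coef sF4 /= => ->.
    by rewrite -size_poly_eq0 sF4.
  set a := FF`_3 in a0 dE; set b := FF`_2 in dE; set c := FF`_1 in dE.
  have {}dx : 3 * a * x ^+ 2 + 2 * b * x + c = 0.
    by rewrite -dx dE !hornerD !hornerCM hornerXn hornerX hornerC; ring.
  have {}dy : 3 * a * y ^+ 2 + 2 * b * y + c = 0.
    by rewrite -dy dE !hornerD !hornerCM hornerXn hornerX hornerC; ring.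
  suff xy : x = y by rewrite -vx -wy xy.
  have [two|two] := eqVneq (2 : K) 0.
    have three : (3 : K) = 1 by rewrite -[3%N]/(1 + 2)%N natrD two addr0.
    rewrite two three !mul0r mul1r addr0 in dx dy.
    have e1 : a * (x ^+ 2 - y ^+ 2) = 0.
      by rewrite -[RHS](subrr 0) -{1}dx -dy; ring.
    move/eqP: e1; rewrite mulf_eq0 (negPf a0) /= => /eqP e1.
    have : (x - y) ^+ 2 = 0.
      have -> : (x - y) ^+ 2 = (x ^+ 2 - y ^+ 2) + 2 * (y * (y - x)) by ring.
      by rewrite e1 two mul0r addr0.
    by move/eqP; rewrite expf_eq0 /= subr_eq0 => /eqP.
  have b2 := deg3 sF4 two rX Er.
  rewrite -/a -/b -/c in b2.
  have sq z : 3 * a * z ^+ 2 + 2 * b * z + c = 0 -> 3 * a * z + b = 0.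
    move=> ez.
    have : (3 * a * z + b) ^+ 2 = 3 * a * (3 * a * z ^+ 2 + 2 * b * z + c) + (b ^+ 2 - 3 * a * c) by ring.
    by rewrite ez b2 subrr mulr0 addr0 => /eqP; rewrite expf_eq0 /= => /eqP.
  have hx := sq x dx.
  have hy := sq y dy.
  have [a3|a3] := eqVneq (3 * a) 0.
    have b0 : b = 0 by rewrite -hx a3 mul0r add0r.
    have c0 : c = 0.
      by apply: etrans (_ : _ = 3 * a * x ^+ 2 + 2 * b * x + c) dx; rewrite a3 b0; ring.
    have a3' : a *+ 3 = 0 by rewrite -(mulr_natl a 3).
    by move: dFF; rewrite dE a3' b0 c0 mul0rn !polyC0 !mul0r !addr0 eqxx.
  apply: (mulfI a3); apply/eqP; rewrite -subr_eq0; apply/eqP.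
  transitivity ((3 * a * x + b) - (3 * a * y + b)); first by ring.
  by rewrite hx hy subrr.
- move=> s4.
  have sf5 : size f = 5%N by lia.
  have [_ rr] := key df0 exc (ltac:(lia)).
  have [r [rX Er]] := rr (ltac:(lia)).
  rewrite -/FF in Er.
  have sF5 : size FF = 5%N by rewrite sFF.
  have s1 : (1 < size FF)%N by rewrite sF5.
  have rE := lin_r s1 Er.
  set m := r`_1 in rE; set n := r`_0 in rE.
  rewrite rE in rX Er.
  have a0 : FF`_4 != 0.
    have := lead_coef_eq0 FF; rewrite /lead_coef sF5 /= => ->.
    by rewrite -size_poly_eq0 sF5.
  have [C3 C2] := deg4 sF5 rX Er.
  set a := FF`_4 in a0 C3 C2; set b := FF`_3 in C2.
  have C3' : m ^+ 3 + m ^+ 2 + m + 1 = 0.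
    by move/eqP: C3; rewrite mulf_eq0 (negPf a0) /= => /eqP.
  have two2 : (2 : F) = 0.
    apply/eqP; apply: contraT => twoF.
    have twoK : (2 : K) != 0 by rewrite -(rmorph_nat iota) fmorph_eq0.
    have [tau Etau] : exists tau, FF \Po ((-1)%:P * 'X + tau%:P) = FF.
      have : (m + 1) * (m ^+ 2 + 1) = 0 by rewrite -C3'; ring.
      move/eqP; rewrite mulf_eq0 => /orP [/eqP m1 | /eqP m2].
        exists n; rewrite (_ : -1 = m) //.
        by rewrite -(addrK 1 m) m1 sub0r.
      exists (m * n + n).
      have rr2 : (-1)%:P * 'X + (m * n + n)%:P = (m%:P * 'X + n%:P) \Po (m%:P * 'X + n%:P).
        rewrite comp_polyD comp_polyM !comp_polyC comp_polyX.
        rewrite (_ : -1 = m ^+ 2); last by rewrite -(addrK 1 (m ^+ 2)) m2 sub0r.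
        ring.
      by rewrite rr2 comp_polyA !Er.
    have rX' : (-1)%:P * 'X + tau%:P != 'X.
      apply/eqP => e; have := congr1 (fun q : {poly K} => q`_1) e.
      rewrite coefD coefCM !coefX coefC /= mulr1 addr0 => e1.
      by move: twoK; rewrite -[2%N]/(1 + 1)%N natrD -{1}e1 addNr eqxx.
    have [_ C2'] := deg4 sF5 rX' Etau.
    rewrite -/a -/b in C2'.
    have e2 : 2 * a * tau + b = 0 by rewrite -C2'; ring.
    set be : F := f`_3 / (2 * f`_4).
    have a2 : 2 * a != 0 by rewrite mulf_neq0.
    have tauE : tau = iota (- be).
      rewrite rmorphN fmorph_div rmorphM /= rmorph_nat -!cFF -/a -/b.
      apply: (mulfI a2); rewrite mulrN mulrCA mulfV // mulr1.
      by apply/eqP; rewrite -addr_eq0 e2.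
    have Ef : f \Po (- 'X - be%:P) = f.
      apply: (map_poly_inj iota); rewrite map_comp_poly /= -/FF.
      rewrite rmorphB rmorphN /= map_polyX map_polyC /=.
      rewrite -[RHS]Etau tauE rmorphN; congr (_ \Po _); ring.
    set g : {poly {poly F}} := 'X + ('X + be%:P)%:P.
    have dv : rdivides g (polyInX f - polyInY f).
      have rt : root (polyInX f - polyInY f) (- 'X - be%:P).
        rewrite /root /polyInX /polyInY hornerD hornerN hornerC -/(comp_poly _ _) Ef.
        by rewrite subrr.
      have [q Eq] := sig_eqW (factor_theorem _ _ rt).
      exists q; rewrite Eq /g; ring.
    have irr : irreducible_elt (map_poly (map_poly iota) g).
      set G := map_poly (map_poly iota) g.
      have GE : G = 'X + ('X + (iota be)%:P)%:P.
        by rewrite /G /g rmorphD /= map_polyX map_polyC /= rmorphD /= map_polyX map_polyC.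
      have sG : size G = 2%N by rewrite GE size_XaddC.
      have lG : lead_coef G = 1%:P by rewrite GE lead_coefXaddC polyC1.
      split.
      - by rewrite -size_poly_eq0 sG.
      - by rewrite poly_unitE sG.
      - move=> u w e.
        case: (boolP (u \is a GRing.unit)) => uu; first by left.
        case: (boolP (w \is a GRing.unit)) => uw; first by right.
        have [s3 _] := G4 (oner_neq0 K) lG e uu uw.
        by rewrite sG in s3.
    have [c c0 gc] := exc g dv irr.
    have e1 := congr1 (fun p : {poly {poly F}} => p`_1) gc.
    have e0 := congr1 (fun p : {poly {poly F}} => p`_0) gc.
    rewrite /g /bvX /bvY /= coefD coefX coefC /= addr0 coefCM coefD coefN coefX coefC /= in e1.
    rewrite /g /bvX /bvY /= coefD coefX coefC /= add0r coefCM coefD coefN coefX coefC /= in e0.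
    have f1 := congr1 (fun p : {poly F} => p`_0) e1.
    have f0 := congr1 (fun p : {poly F} => p`_1) e0.
    rewrite /= coefCM coefD coefN coef1 coefC /= in f1.
    rewrite /= coefD coefX coefC coefCM coefD coefN coefX coef0 /= in f0.
    move: twoF; rewrite -[2%N]/(1 + 1)%N natrD.
    have -> : (1 : F) + 1 = c * (0 - 1) + c * (1 - 0) by rewrite -f1 -f0 addr0.
    by rewrite sub0r subr0 mulrN1 mulr1 addNr eqxx.
  have twoK : (2 : K) = 0 by rewrite -(rmorph_nat iota) two2 rmorph0.
  split.
    have pc : 2 \in [pchar F] by rewrite inE /= two2 eqxx.
    have cF : #|F| = (2 ^ logn 2 #|F|)%N := card_pprimeChar pc.
    rewrite cF oddX orbF; apply/negP => /eqP l0.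
    by move: (finNzRing_gt1 F); rewrite cF l0.
  move=> v [x [dx vx]].
  rewrite -/FF in dx.
  have m1 : m = -1.
    have : (m + 1) ^+ 3 = 0.
      transitivity ((m ^+ 3 + m ^+ 2 + m + 1) + 2 * (m ^+ 2 + m)); first by ring.
      by rewrite C3' twoK; ring.
    move/eqP; rewrite expf_eq0 /= => /eqP e.
    by rewrite -(addrK 1 m) e sub0r.
  rewrite m1 in C2.
  have b0 : b = 0.
    transitivity (a * (3 * (-1) ^+ 2 * n + 2 * (-1) * n + n) + b * ((-1) ^+ 2 + (-1) + 1) - 2 * (a * n)); first by ring.
    by rewrite C2 twoK; ring.
  have sp5 : (size FF <= 5)%N by rewrite sF5.
  have dE := deriv5 sp5.
  rewrite -/a -/b in dE.
  have z4 : a *+ 4 = 0.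
    have -> : a *+ 4 = (a *+ 2) *+ 2 by rewrite -mulrnA.
    by rewrite -(mulr_natr a 2) twoK mulr0 mul0rn.
  have z2 : FF`_2 *+ 2 = 0 by rewrite -mulr_natr twoK mulr0.
  rewrite z4 z2 b0 mul0rn !polyC0 !mul0r !add0r in dE.
  move: dx; rewrite dE hornerC => d0.
  by move: dFF; rewrite dE d0 polyC0 eqxx.
Qed.
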